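(* For every $\epsilon\in(0,1)$ there is an instance consisting of $E=\{e_1,e_2,e_3\}$, $O=\{o_1,o_2\}$, a prior $p$ whose support is $U^+=\{\phi_1,\phi_2,\phi_3\}$ with $\phi_i(e_i)=o_1$ and $\phi_i(e_j)=o_2$ for $j\ne i$, and the utility $f(S,\phi)=\epsilon\cdot\mathbf 1[e_1\in S]+\sum_{i\in\{2,3\}}\mathbf 1[e_i\in S]\,\mathbf 1[\phi(e_i)=o_2]$, such that: $f$ is pointwise monotone and pointwise submodular, worst-case monotone, and satisfies minimal dependency; yet for cardinality $k=2$ the adaptive worst-case greedy policy $\pi^g$ (with any tie-breaking) satisfies $f_{wc}(\pi^g)=\epsilon$, while $f_{wc}(\pi^*_{wc})=1$ for an optimal policy $\pi^*_{wc}$ among policies selecting at most $2$ items. In particular, pointwise submodularity together with worst-case monotonicity and minimal dependency does not imply worst-case submodularity, and under these hypotheses the approximation ratio of $\pi^g$ can be arbitrarily close to $0$.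
   Context: Setting. $E$ is a finite set of items, $O$ a finite set of states, a realization is $\phi:E\to O$, $p$ a prior on realizations, $\Phi\sim p$, $U^+=\{\phi:p(\phi)>0\}$. A partial realization is $\psi:S\to O$, $S=\mathrm{dom}(\psi)\subseteq E$, identified with its set of pairs; $\phi\sim\psi$ means $\phi$ agrees with $\psi$ on $\mathrm{dom}(\psi)$; only $\psi$ with $\Pr[\Phi\sim\psi]>0$ are considered and $p(\phi\mid\psi)=\Pr[\Phi=\phi\mid\Phi\sim\psi]$. $f(S,\psi)=\mathbb{E}[f(S,\Phi)\mid\Phi\sim\psi]$. For $e\notin\mathrm{dom}(\psi)$, $O(e,\psi)=\{o:\exists\phi,\ p(\phi\mid\psi)>0,\ \phi(e)=o\}$ and $f_{wc}(e\mid\psi)=\min_{o\in O(e,\psi)}\{f(\mathrm{dom}(\psi)\cup\{e\},\psi\cup\{(e,o)\})-f(\mathrm{dom}(\psi),\psi)\}$. $f$ is worst-case submodular if $f_{wc}(e\mid\psi)\ge f_{wc}(e\mid\psi')$ for all $\psi\subseteq\psi'$ and $e\notin\mathrm{dom}(\psi')$; worst-case monotone if $f_{wc}(e\mid\psi)\ge0$ always. $f$ satisfies minimal dependency if $f(\mathrm{dom}(\psi),\psi)=f(\mathrm{dom}(\psi),\phi)$ for all $\psi$ and $\phi\in U^+$ with $\phi\sim\psi$. $f$ is pointwise submodular (resp. pointwise monotone) if for each $\phi\in U^+$ the set function $S\mapsto f(S,\phi)$ is submodular (resp. monotone nondecreasing). A (deterministic) policy, given the current observed partial realization, selects a new item or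 stops; $E(\pi,\phi)$ is the set it selects under $\phi$, and $f_{wc}(\pi)=\min_{\phi\in U^+}f(E(\pi,\phi),\phi)$. The adaptive worst-case greedy policy $\pi^g$ for cardinality $k$: with $\psi_0=\emptyset$, for $t=1,\dots,k$ select $e_t\in\arg\max_{e\in E\setminus\mathrm{dom}(\psi_{t-1})}f_{wc}(e\mid\psi_{t-1})$, observe its state and set $\psi_t=\psi_{t-1}\cup\{(e_t,\Phi(e_t))\}$. $\pi^*_{wc}$ maximizes $f_{wc}(\pi)$ over policies with $|E(\pi,\phi)|\le k$ for all $\phi\in U^+$. *)

(* Defs.v *)
From HB Require Import structures.
From mathcomp Require Import all_boot all_order all_algebra.
Set Implicit Arguments. Unset Strict Implicit. Unset Printing Implicit Defensive.
Import Order.TTheory GRing.Theory Num.Theory.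
Local Open Scope ring_scope.

Section General.
Variables (E O : finType) (R : realFieldType).

Definition realization := {ffun E -> O}.
(** partial realizations psi : S -> O, encoded as E -> option O with
    dom psi = { e | psi e <> None } *)
Definition prealization := {ffun E -> option O}.

Definition dom (psi : prealization) : {set E} := [set e | psi e != None].
Definition empty_pr : prealization := [ffun _ => None].
Definition ext (psi : prealization) (e : E) (o : O) : prealization :=
  [ffun x => if x == e then Some o else psi x].
Definition agrees (phi : realization) (psi : prealization) : bool :=
  [forall e, if psi e is Some o then phi e == o else true].
Definition subpr (psi psi' : prealization) : Prop :=
  forall e o, psi e = Some o -> psi' e = Some o.

Variable p : realization -> R.
Variable f : {set E} -> realization -> R.

Definition Usupp (phi : realization) : bool := 0 < p phi.
Definition prior_ok : Prop := (forall phi, 0 <= p phi) /\ \sum_phi p phi = 1.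

Definition PrC (psi : prealization) : R := \sum_(phi | agrees phi psi) p phi.
Definition pcond (phi : realization) (psi : prealization) : R :=
  if agrees phi psi then p phi / PrC psi else 0.
Definition fexp (S : {set E}) (psi : prealization) : R :=
  \sum_phi pcond phi psi * f S phi.

Definition minr_seq (s : seq R) : R := \big[Order.min/head 0 s]_(x <- s) x.

Definition Oset (e : E) (psi : prealization) : {set O} :=
  [set o | [exists phi, (0 < pcond phi psi) && (phi e == o)]].

Definition fwc (e : E) (psi : prealization) : R :=
  minr_seq [seq fexp (e |: dom psi) (ext psi e o) - fexp (dom psi) psi
           | o <- enum (Oset e psi)].

Definition wc_submodular : Prop :=
  forall psi psi' e, 0 < PrC psi -> 0 < PrC psi' -> subpr psi psi' ->
    e \notin dom psi' -> fwc e psi' <= fwc e psi.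
Definition wc_monotone : Prop :=
  forall psi e, 0 < PrC psi -> e \notin dom psi -> 0 <= fwc e psi.
Definition min_dependency : Prop :=
  forall psi phi, 0 < PrC psi -> Usupp phi -> agrees phi psi ->
    fexp (dom psi) psi = f (dom psi) phi.
Definition pw_submodular : Prop :=
  forall phi, Usupp phi -> forall (S T : {set E}) e, S \subset T -> e \notin T ->
    f (e |: T) phi - f T phi <= f (e |: S) phi - f S phi.
Definition pw_monotone : Prop :=
  forall phi, Usupp phi -> forall (S T : {set E}), S \subset T -> f S phi <= f T phi.

(** Deterministic policies: given the observed partial realization, select an
    item (Some e) or stop (None).  Selecting an already observed item is
    treated as stopping. *)
Definition policy := prealization -> option E.

Definition step (pi : policy) (phi : realization) (psi : prealization)
  : prealization :=
  match pi psi with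
  | Some e => if e \in dom psi then psi else ext psi e (phi e)
  | None => psi
  end.
(** at most #|E| items can be selected, so #|E| steps reach the final state *)
Definition run (pi : policy) (phi : realization) : prealization :=
  iter #|E| (step pi phi) empty_pr.
Definition Epol (pi : policy) (phi : realization) : {set E} := dom (run pi phi).

Definition fwc_pol (pi : policy) : R :=
  minr_seq [seq f (Epol pi phi) phi | phi <- enum Usupp].

Definition bounded (k : nat) (pi : policy) : Prop :=
  forall phi, Usupp phi -> (#|Epol pi phi| <= k)%N.

Definition is_greedy (k : nat) (pi : policy) : Prop :=
  forall psi, 0 < PrC psi ->
    if (#|dom psi| < k)%N && (dom psi != setT) then
      exists e, [/\ pi psi = Some e, e \notin dom psi &
                 forall e', e' \notin dom psi -> fwc e' psi <= fwc e psi]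
    else pi psi = None.

End General.

Definition Eit := 'I_3.
Definition Ost := 'I_2.
Definition e1 : Eit := inord 0.
Definition e2 : Eit := inord 1.
Definition e3 : Eit := inord 2.
Definition o1 : Ost := inord 0.
Definition o2 : Ost := inord 1.

Definition phi_i (i : Eit) : {ffun Eit -> Ost} :=
  [ffun j => if j == i then o1 else o2].

Definition util (R : realFieldType) (eps : R) (S : {set Eit})
    (phi : {ffun Eit -> Ost}) : R :=
  eps * (e1 \in S)%:R
  + \sum_(i <- [:: e2; e3]) ((i \in S)%:R * (phi i == o2)%:R).

(* Main.v *)
Require Import Defs.
From HB Require Import structures.
From mathcomp Require Import all_boot all_order all_algebra.
From mathcomp Require Import ring lra.
Import Order.TTheory GRing.Theory Num.Theory.
Local Open Scope ring_scope.
Set Implicit Arguments. Unset Strict Implicit. Unset Printing Implicit Defensive.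

Lemma big_min_le (R : realFieldType) (idx : R) (s : seq R) y :
  y \in s -> \big[Order.min/idx]_(x <- s) x <= y.
Proof.
elim: s => //= a s IH; rewrite inE big_cons => /orP [/eqP->|/IH h].
  by rewrite ge_min lexx.
by rewrite ge_min h orbT.
Qed.

Lemma big_min_ge (R : realFieldType) (idx c : R) (s : seq R) :
  c <= idx -> (forall y, y \in s -> c <= y) -> c <= \big[Order.min/idx]_(x <- s) x.
Proof.
elim: s => [|a s IH] h1 h2; rewrite ?big_nil ?big_cons // le_min h2 ?mem_head //.
by rewrite IH // => y hy; apply: h2; rewrite inE hy orbT.
Qed.

Lemma minr_seq_eq (R : realFieldType) (s : seq R) x :
  x \in s -> (forall y, y \in s -> x <= y) -> minr_seq s = x.
Proof.
move=> hx hall; apply/le_anti; rewrite /minr_seq big_min_le //=.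
case: s hx hall => [//|a s] hx hall; apply: big_min_ge => //.
by apply: hall; rewrite mem_head.
Qed.

Lemma minr_seq_le (R : realFieldType) (s : seq R) x :
  x \in s -> minr_seq s <= x.
Proof. by move=> hx; rewrite /minr_seq big_min_le. Qed.

Lemma fexp_const (E O : finType) (R : realFieldType) (p : {ffun E -> O} -> R)
   (f : {set E} -> {ffun E -> O} -> R) S psi c :
  0 < PrC p psi -> (forall phi, agrees phi psi -> f S phi = c) -> fexp p f S psi = c.
Proof.
move=> hP hc; rewrite /fexp.
transitivity (\sum_phi pcond p phi psi * c).
  apply: eq_bigr => phi _; rewrite /pcond; case: ifP => [/hc -> //| _].
  by rewrite !mul0r.
rewrite -mulr_suml /pcond -big_mkcond /= -mulr_suml.
by rewrite -/(PrC p psi) divff ?mul1r // gt_eqF.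
Qed.

Lemma dom_ext (E O : finType) (psi : prealization E O) e o :
  dom (ext psi e o) = e |: dom psi.
Proof. by apply/setP => x; rewrite /dom !inE ffunE; case: (x == e). Qed.

Lemma dom_empty (E O : finType) : dom (empty_pr E O) = set0.
Proof. by apply/setP => x; rewrite /dom !inE ffunE. Qed.

Lemma agreesP (E O : finType) (phi : {ffun E -> O}) psi x o :
  agrees phi psi -> psi x = Some o -> phi x = o.
Proof. by move=> /forallP /(_ x) h hx; move: h; rewrite hx => /eqP. Qed.

Lemma agrees_empty (E O : finType) (phi : {ffun E -> O}) : agrees phi (empty_pr E O).
Proof. by apply/forallP => x; rewrite ffunE. Qed.

Lemma agrees_ext (E O : finType) (phi : {ffun E -> O}) psi e o :
  agrees phi psi -> phi e = o -> agrees phi (ext psi e o).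
Proof.
move=> /forallP h he; apply/forallP => x; rewrite ffunE.
by case: eqP => [->|_]; [rewrite he | apply: h].
Qed.

Lemma dom_step (E O : finType) (pi : policy E O) phi psi :
  dom psi \subset dom (step pi phi psi).
Proof.
rewrite /step; case: (pi psi) => [e|]; last exact: subxx.
by case: ifP => _; rewrite ?subxx // dom_ext subsetUr.
Qed.

Lemma ve1 : nat_of_ord e1 = 0%N. Proof. by rewrite /e1 inordK. Qed.
Lemma ve2 : nat_of_ord e2 = 1%N. Proof. by rewrite /e2 inordK. Qed.
Lemma ve3 : nat_of_ord e3 = 2%N. Proof. by rewrite /e3 inordK. Qed.
Lemma vo1 : nat_of_ord o1 = 0%N. Proof. by rewrite /o1 inordK. Qed.
Lemma vo2 : nat_of_ord o2 = 1%N. Proof. by rewrite /o2 inordK. Qed.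

Lemma e12 : (e1 == e2) = false. Proof. by rewrite -val_eqE /= ve1 ve2. Qed.
Lemma e13 : (e1 == e3) = false. Proof. by rewrite -val_eqE /= ve1 ve3. Qed.
Lemma e23 : (e2 == e3) = false. Proof. by rewrite -val_eqE /= ve3 ve2. Qed.
Lemma e21 : (e2 == e1) = false. Proof. by rewrite eq_sym e12. Qed.
Lemma e31 : (e3 == e1) = false. Proof. by rewrite eq_sym e13. Qed.
Lemma e32 : (e3 == e2) = false. Proof. by rewrite eq_sym e23. Qed.
Lemma o12 : (o1 == o2) = false. Proof. by rewrite -val_eqE /= vo1 vo2. Qed.
Lemma o21 : (o2 == o1) = false. Proof. by rewrite eq_sym o12. Qed.
Definition eqE := (e12, e13, e23, e21, e31, e32, o12, o21, eqxx).

Lemma Eit_cases (x : Eit) : [\/ x = e1, x = e2 | x = e3].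
Proof.
case: x => [[|[|[|m]]] Hm] //.
- by apply: Or31; apply: val_inj; rewrite /= ve1.
- by apply: Or32; apply: val_inj; rewrite /= ve2.
- by apply: Or33; apply: val_inj; rewrite /= ve3.
Qed.

Lemma Ost_cases (x : Ost) : x = o1 \/ x = o2.
Proof.
case: x => [[|[|m]] Hm] //.
- by left; apply: val_inj; rewrite /= vo1.
- by right; apply: val_inj; rewrite /= vo2.
Qed.

Lemma phiE i j : phi_i i j = if j == i then o1 else o2.
Proof. by rewrite ffunE. Qed.

Definition L := [:: phi_i e1; phi_i e2; phi_i e3].

Lemma phi_inj i j : phi_i i = phi_i j -> i = j.
Proof.
move=> h; have := congr1 (fun f : {ffun Eit -> Ost} => f i) h; rewrite /= !phiE eqxx.
by case: eqP => // _ /eqP; rewrite o12.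
Qed.

Lemma uniqL : uniq L.
Proof.
rewrite /L /= !inE !andbT.
by apply/andP; split; [apply/norP; split|]; apply/eqP => /phi_inj /eqP; rewrite eqE.
Qed.

Lemma phi_in_L i : phi_i i \in L.
Proof. by case: (Eit_cases i) => ->; rewrite !inE eqxx ?orbT. Qed.

Lemma L_o1 phi e : phi \in L -> phi e = o1 -> phi = phi_i e.
Proof.
rewrite !inE => /or3P [] /eqP -> ; rewrite phiE; case: eqP => [->//|_].
all: by move/eqP; rewrite eqE.
Qed.

Definition pr (R : realFieldType) (phi : {ffun Eit -> Ost}) : R :=
  if phi \in L then 3^-1 else 0.

Section Inst.
Variables (R : realFieldType) (eps : R).
Hypothesis heps : 0 < eps < 1.

Lemma pr_ge0 phi : 0 <= pr R phi.
Proof. by rewrite /pr; case: ifP => // _; rewrite invr_ge0 ler0n. Qed.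

Lemma pr_gt0 phi : (0 < pr R phi) = (phi \in L).
Proof. by rewrite /pr; case: ifP => _; rewrite ?ltxx // invr_gt0 ltr0n. Qed.

Lemma prior_okP : prior_ok (pr R).
Proof.
split; first exact: pr_ge0.
rewrite /pr -big_mkcond /= -(big_uniq _ uniqL) /L !big_cons big_nil.
have h3 : (3 : R) != 0 by rewrite pnatr_eq0.
change ((3:R)^-1 + ((3:R)^-1 + ((3:R)^-1 + 0)) = 1). by field.
Qed.

Lemma util_eq S (phi : {ffun Eit -> Ost}) : util eps S phi =
  eps * (e1 \in S)%:R + (e2 \in S)%:R * (phi e2 == o2)%:R
  + (e3 \in S)%:R * (phi e3 == o2)%:R.
Proof. by rewrite /util !big_cons big_nil addr0 addrA. Qed.

Lemma util_agree psi phi phi' : agrees phi psi -> agrees phi' psi ->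
  util eps (dom psi) phi = util eps (dom psi) phi'.
Proof.
move=> h h'.
have key x : (x \in dom psi)%:R * (phi x == o2)%:R =
             (x \in dom psi)%:R * (phi' x == o2)%:R :> R.
  rewrite /dom inE; case hx: (psi x) => [o|] //=.
  by rewrite (agreesP h hx) (agreesP h' hx).
  by rewrite !mul0r.
by rewrite !util_eq !key.
Qed.

Lemma PrC_pos psi : 0 < PrC (pr R) psi <-> exists phi, (phi \in L) && agrees phi psi.
Proof.
split.
  move=> h; case: (boolP [exists phi, (phi \in L) && agrees phi psi]) => [/existsP //|/existsPn hn].
  move: h; rewrite /PrC big1 ?ltxx // => phi hag.
  by move: (hn phi); rewrite hag andbT /pr => /negbTE ->.
case=> phi /andP [hL hag]; rewrite /PrC (bigD1 phi) //=.
apply: (lt_le_trans (_ : 0 < pr R phi)); first by rewrite pr_gt0.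
by rewrite lerDl sumr_ge0 // => ? _; apply: pr_ge0.
Qed.

Lemma pcond_pos phi psi : 0 < pcond (pr R) phi psi -> agrees phi psi /\ phi \in L.
Proof.
rewrite /pcond; case: ifP => [hag|]; last by rewrite ltxx.
split=> //; rewrite -pr_gt0; apply/negPn/negP; rewrite -leNgt => hle.
have h0 : pr R phi = 0 by apply/le_anti; rewrite hle pr_ge0.
by move: H; rewrite h0 mul0r ltxx.
Qed.

Lemma incr_util (S : {set Eit}) (e : Eit) (phi : {ffun Eit -> Ost}) : e \notin S ->
  util eps (e |: S) phi - util eps S phi =
  if e == e1 then eps else (phi e == o2)%:R.
Proof.
move=> heS; rewrite !util_eq !inE.
case: (Eit_cases e) heS => -> /negbTE hS; rewrite ?eqE ?hS /=; ring.
Qed.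

Lemma fwcE psi e : 0 < PrC (pr R) psi -> e \notin dom psi ->
  fwc (pr R) (util eps) e psi =
  if e == e1 then eps else if agrees (phi_i e) psi then 0 else 1.
Proof.
move=> hP heS; set S := dom psi.
have key o : o \in Oset (pr R) e psi ->
   fexp (pr R) (util eps) (e |: S) (ext psi e o) - fexp (pr R) (util eps) S psi
   = if e == e1 then eps else (o == o2)%:R.
  rewrite inE => /existsP [phi /andP [hpc /eqP heo]].
  have [hag hL] := pcond_pos hpc.
  have hag' : agrees phi (ext psi e o) := agrees_ext hag heo.
  have hP' : 0 < PrC (pr R) (ext psi e o) by apply/PrC_pos; exists phi; rewrite hL.
  rewrite (@fexp_const _ _ _ _ _ _ _ (util eps (e |: S) phi)) //; last first.
    by move=> phi' h'; rewrite /S -(dom_ext psi e o); apply: util_agree.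
  rewrite (@fexp_const _ _ _ _ _ _ _ (util eps S phi)) //; last first.
    by move=> phi' h'; apply: util_agree.
  by rewrite incr_util // heo.
have [phi0 /andP [hL0 hag0]] := (iffLR (PrC_pos psi)) hP.
have hpc0 : 0 < pcond (pr R) phi0 psi.
  by rewrite /pcond hag0 divr_gt0 // pr_gt0.
have hO0 : phi0 e \in Oset (pr R) e psi.
  by rewrite inE; apply/existsP; exists phi0; rewrite hpc0 eqxx.
rewrite /fwc -/S.
set g := fun o : Ost => if e == e1 then eps else (o == o2)%:R.
have -> : [seq fexp (pr R) (util eps) (e |: S) (ext psi e o) -
              fexp (pr R) (util eps) S psi | o <- enum (Oset (pr R) e psi)]
          = [seq g o | o <- enum (Oset (pr R) e psi)].
  by apply/eq_in_map => o; rewrite mem_enum => /key.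
have hmem o : o \in Oset (pr R) e psi -> g o \in [seq g o | o <- enum (Oset (pr R) e psi)].
  by move=> ho; apply: map_f; rewrite mem_enum.
case: ifP => he1.
  apply: minr_seq_eq; first by have := hmem _ hO0; rewrite /g he1.
  by move=> y /mapP [o _ ->]; rewrite /g he1.
case: ifP => hag.
  apply: minr_seq_eq.
    have : o1 \in Oset (pr R) e psi.
      rewrite inE; apply/existsP; exists (phi_i e).
      by rewrite /pcond hag divr_gt0 ?pr_gt0 ?phi_in_L //= phiE eqxx.
    by move/hmem; rewrite /g he1 o12.
  by move=> y /mapP [o _ ->]; rewrite /g he1 ler0n.
have hall o : o \in Oset (pr R) e psi -> o = o2.
  rewrite inE => /existsP [phi /andP [hpc /eqP heo]].
  have [hag' hL] := pcond_pos hpc.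
  case: (Ost_cases o) => ho; last by []. rewrite ho in heo.
  by move: hag; rewrite -(L_o1 hL heo) hag'.
apply: minr_seq_eq.
  by have := hmem _ hO0; rewrite /g he1 (hall _ hO0) eqxx.
by move=> y /mapP [o]; rewrite mem_enum => /hall -> ->; rewrite /g he1 eqxx.
Qed.

Lemma natr_le (a b : bool) : (a -> b) -> (a%:R : R) <= b%:R.
Proof. by case: a; case: b => // /(_ isT). Qed.

Lemma pw_mono : pw_monotone (pr R) (util eps).
Proof.
move=> phi _ S T /subsetP hST; rewrite !util_eq.
have h x : ((x \in S)%:R : R) <= (x \in T)%:R by apply: natr_le => /hST.
have he : 0 <= eps by case/andP: heps => /ltW.
rewrite lerD // ?lerD // ?ler_wpM2l // ?ler_wpM2r //.
Qed.

Lemma pw_submod : pw_submodular (pr R) (util eps).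
Proof.
move=> phi _ S T e /subsetP hST heT.
have heS : e \notin S by apply/negP => /hST; apply/negP.
by rewrite !incr_util.
Qed.

Lemma wc_mono : wc_monotone (pr R) (util eps).
Proof.
move=> psi e hP he; rewrite fwcE //.
case: ifP => _; first by case/andP: heps => /ltW.
by case: ifP.
Qed.

Lemma min_dep : min_dependency (pr R) (util eps).
Proof.
move=> psi phi hP _ hag; apply: fexp_const => // phi' h'.
exact: util_agree.
Qed.

Lemma PrC_empty : 0 < PrC (pr R) (empty_pr Eit Ost).
Proof. by apply/PrC_pos; exists (phi_i e1); rewrite phi_in_L agrees_empty. Qed.

Lemma not_wc_submod : ~ wc_submodular (pr R) (util eps).
Proof.
move=> H.
set psi' := ext (empty_pr Eit Ost) e2 o1.
have hag : agrees (phi_i e2) psi'.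
  by apply: agrees_ext; rewrite ?agrees_empty // phiE eqxx.
have hP' : 0 < PrC (pr R) psi' by apply/PrC_pos; exists (phi_i e2); rewrite phi_in_L hag.
have hsub : subpr (empty_pr Eit Ost) psi' by move=> x o; rewrite ffunE.
have hn' : e3 \notin dom psi' by rewrite dom_ext dom_empty !inE eqE.
have hn : e3 \notin dom (empty_pr Eit Ost) by rewrite dom_empty inE.
have := H _ _ e3 PrC_empty hP' hsub hn'.
rewrite !fwcE ?PrC_empty // e31 agrees_empty.
have -> : agrees (phi_i e3) psi' = false.
  apply/negP => h.
  have hx : psi' e2 = Some o1 by rewrite /psi' ffunE eqxx.
  have := agreesP h hx.
  by rewrite phiE e23 => /eqP; rewrite o21.
by rewrite ler10.
Qed.

Lemma run_iter (pi : policy Eit Ost) phi :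
  run pi phi = iter 3 (step pi phi) (empty_pr Eit Ost).
Proof. by rewrite /run card_ord. Qed.

Lemma set0_neqT : (set0 : {set Eit}) != setT.
Proof. by apply/negP => /eqP h; have := in_setT e1; rewrite -h inE. Qed.

Lemma neq_set (A B : {set Eit}) x : x \in A -> x \notin B -> (A == B) = false.
Proof. by move=> hA hB; apply/negP => /eqP h; move: hB; rewrite -h hA. Qed.

Lemma util_ge (S : {set Eit}) (phi : {ffun Eit -> Ost}) : e1 \in S -> eps <= util eps S phi.
Proof.
move=> h; rewrite util_eq h mulr1 -addrA lerDl.
by rewrite addr_ge0 // mulr_ge0 // ler0n.
Qed.

Lemma supp_enum phi : (phi \in enum (Usupp (pr R))) = (phi \in L).
Proof. by rewrite mem_enum unfold_in /Usupp pr_gt0. Qed.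

Section Greedy.
Variable pi : policy Eit Ost.
Hypothesis hg : is_greedy (pr R) (util eps) 2 pi.

Lemma g0 : pi (empty_pr Eit Ost) = Some e1.
Proof.
have := hg PrC_empty; rewrite dom_empty cards0 set0_neqT /=.
case=> e [he hne hmax]; case: (eqVneq e e1) => [hq|hne1]; first by rewrite -hq.
have := hmax e1; rewrite !fwcE ?PrC_empty ?dom_empty ?inE // eqxx (negbTE hne1).
rewrite agrees_empty => /(_ isT).
by case/andP: heps => h _; rewrite leNgt h.
Qed.

Lemma step_empty phi : step pi phi (empty_pr Eit Ost) = ext (empty_pr Eit Ost) e1 (phi e1).
Proof. by rewrite /step g0 dom_empty inE. Qed.

Lemma e1_in phi : e1 \in Epol pi phi.
Proof.
rewrite /Epol run_iter /=.
apply: (subsetP (dom_step pi phi _)); apply: (subsetP (dom_step pi phi _)).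
by rewrite step_empty dom_ext setU11.
Qed.

Lemma greedy_val : fwc_pol (pr R) (util eps) pi = eps.
Proof.
set psia := ext (empty_pr Eit Ost) e1 o2.
have hPa : 0 < PrC (pr R) psia.
  apply/PrC_pos; exists (phi_i e2); rewrite phi_in_L /=.
  by apply: agrees_ext; rewrite ?agrees_empty // phiE e12.
have hda : dom psia = [set e1] by rewrite dom_ext dom_empty setU0.
have hT1 : ([set e1] == setT) = false.
  by apply/negP => /eqP h; have := in_setT e2; rewrite -h inE e21.
have := hg hPa; rewrite hda cards1 hT1 /=.
case=> e' [he' hne' _].
have hne1 : (e1 == e') = false by move: hne'; rewrite inE eq_sym => /negbTE.
pose phi : realization Eit Ost := phi_i e'.
have hphi1 : phi e1 = o2 by rewrite /phi phiE hne1.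
have hphi' : phi e' = o1 by rewrite /phi phiE eqxx.
set psi2 := ext psia e' o1.
have hP2 : 0 < PrC (pr R) psi2.
  apply/PrC_pos; exists phi; rewrite phi_in_L /=.
  by apply: agrees_ext => //; apply: agrees_ext; rewrite ?agrees_empty.
have hd2 : dom psi2 = e' |: [set e1] by rewrite dom_ext hda.
have hN : pi psi2 = None.
  have := hg hP2; rewrite hd2 cardsU1 cards1 inE (eq_sym e') hne1 /=.
  by [].
have hrun : run pi phi = psi2.
  rewrite run_iter /= step_empty hphi1 -/psia.
  rewrite {2}/step he' hda inE eq_sym hne1 hphi' -/psi2.
  by rewrite /step hN.
apply: minr_seq_eq.
  apply/mapP; exists phi; first by rewrite supp_enum phi_in_L.
  rewrite /Epol hrun hd2 util_eq !inE /phi !phiE.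
  case: (Eit_cases e') hne1 => -> //; rewrite ?eqE //= => _; ring.
by move=> y /mapP [phi0 _ ->]; apply: util_ge; apply: e1_in.
Qed.
End Greedy.

Definition gpi : policy Eit Ost := fun psi =>
  if (#|dom psi| < 2)%N && (dom psi != setT) then
    [pick e | (e \notin dom psi) &&
       [forall e', (e' \notin dom psi) ==>
          (fwc (pr R) (util eps) e' psi <= fwc (pr R) (util eps) e psi)]]
  else None.

Lemma gpi_greedy : is_greedy (pr R) (util eps) 2 gpi.
Proof.
move=> psi hP; rewrite /gpi; case: ifP => [hc|hc]; last first.
  by case: ifP => // ht; have := etrans (esym ht) hc.
case/andP: (hc) => _ hT.
case: ifP => [_|hf]; last by have := etrans (esym hc) hf.
case: pickP => [e /andP [he /forallP hm]|hn].
  by exists e; split => // e' he'; apply: (implyP (hm e') he').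
exfalso.
case: (pickP (fun e => e \notin dom psi)) => [e0 he0|h0]; last first.
  move/negP: hT; apply; apply/eqP/setP => x; rewrite in_setT.
  by move: (h0 x) => /negbFE.
case: (@arg_maxP _ R Eit e0 (fun e => e \notin dom psi)
          (fun e => fwc (pr R) (util eps) e psi) he0) => e he hmax.
move: (hn e); rewrite he /= => /negbT /forallPn [e' ].
rewrite negb_imply => /andP [h1 h2].
by move: h2 (hmax e' h1) => /negP.
Qed.

Definition opt : policy Eit Ost := fun psi =>
  if dom psi == set0 then Some e2 else if dom psi == [set e2] then Some e3 else None.

Lemma opt_s1 phi psi : dom psi = set0 -> step opt phi psi = ext psi e2 (phi e2).
Proof. by move=> h; rewrite /step /opt h eqxx inE. Qed.

Lemma opt_s2 phi psi : dom psi = [set e2] -> step opt phi psi = ext psi e3 (phi e3).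
Proof.
move=> h; rewrite /step /opt h (neq_set (x := e2)) ?inE ?eqxx //.
by rewrite inE e32.
Qed.

Lemma opt_s3 phi psi : dom psi = e3 |: [set e2] -> step opt phi psi = psi.
Proof.
move=> h; rewrite /step /opt h (neq_set (x := e3)) ?inE ?eqxx //.
by rewrite (neq_set (x := e3)) ?inE ?eqxx ?e32.
Qed.

Lemma opt_Epol phi : Epol opt phi = e3 |: [set e2].
Proof.
have h1 : dom (ext (empty_pr Eit Ost) e2 (phi e2)) = [set e2].
  by rewrite dom_ext dom_empty setU0.
rewrite /Epol run_iter /= (opt_s1 _ (dom_empty _ _)) (opt_s2 _ h1) opt_s3 //.
by rewrite dom_ext h1.
by rewrite dom_ext h1.
Qed.

Lemma opt_bounded : bounded (pr R) 2 opt.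
Proof. by move=> phi _; rewrite opt_Epol cardsU1 cards1 inE e32. Qed.

Lemma opt_val : fwc_pol (pr R) (util eps) opt = 1.
Proof.
apply: minr_seq_eq.
  apply/mapP; exists (phi_i e2); first by rewrite supp_enum phi_in_L.
  by rewrite opt_Epol util_eq !inE !phiE !eqE /=; ring.
move=> y /mapP [phi]; rewrite supp_enum => hL ->.
rewrite opt_Epol util_eq !inE !eqE /=.
move: hL; rewrite !inE => /or3P [] /eqP ->; rewrite !phiE !eqE /=; lra.
Qed.

Lemma all_in (S : {set Eit}) : e1 \in S -> e2 \in S -> e3 \in S -> #|S| = 3%N.
Proof.
move=> h1 h2 h3; have -> : S = setT.
  by apply/setP => x; rewrite in_setT; case: (Eit_cases x) => ->.
by rewrite cardsT card_ord.
Qed.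

Lemma inv_run (pi : policy Eit Ost) n :
  let a := iter n (step pi (phi_i e2)) (empty_pr Eit Ost) in
  let b := iter n (step pi (phi_i e3)) (empty_pr Eit Ost) in
  [\/ a = b /\ (e2 \notin dom a) && (e3 \notin dom a),
      (e2 \in dom a) && (e2 \in dom b) | (e3 \in dom a) && (e3 \in dom b)].
Proof.
elim: n => [|n IH] /=.
  by apply: Or31; split => //; rewrite dom_empty !inE.
case: IH => [[hab /andP [n2 n3]]|/andP [h2 h2']|/andP [h3 h3']].
- rewrite -hab; set a := iter n _ _.
  rewrite /step; case hpi: (pi a) => [e|]; last by apply: Or31; split => //; apply/andP.
  case: ifP => hin; first by apply: Or31; split => //; apply/andP.
  case: (Eit_cases e) => ->.
  + rewrite !phiE !eqE; apply: Or31; split => //.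
    by rewrite dom_ext !in_setU1 !eqE /=; apply/andP.
  + by apply: Or32; rewrite !dom_ext !inE eqxx.
  + by apply: Or33; rewrite !dom_ext !inE eqxx.
- by apply: Or32; rewrite !(subsetP (dom_step _ _ _)).
- by apply: Or33; rewrite !(subsetP (dom_step _ _ _)).
Qed.

Lemma bounded_le (pi : policy Eit Ost) : bounded (pr R) 2 pi ->
  fwc_pol (pr R) (util eps) pi <= 1.
Proof.
move=> hb.
have m2 : util eps (Epol pi (phi_i e2)) (phi_i e2) \in
   [seq util eps (Epol pi phi) phi | phi <- enum (Usupp (pr R))].
  by apply: map_f; rewrite supp_enum phi_in_L.
have m3 : util eps (Epol pi (phi_i e3)) (phi_i e3) \in
   [seq util eps (Epol pi phi) phi | phi <- enum (Usupp (pr R))].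
  by apply: map_f; rewrite supp_enum phi_in_L.
have b2 : (#|Epol pi (phi_i e2)| <= 2)%N by apply: hb; rewrite /Usupp pr_gt0 phi_in_L.
have b3 : (#|Epol pi (phi_i e3)| <= 2)%N by apply: hb; rewrite /Usupp pr_gt0 phi_in_L.
case/andP: heps => he0 he1.
have hinv := inv_run pi 3.
have := minr_seq_le m2; have := minr_seq_le m3.
move: b2 b3 hinv; rewrite /Epol !run_iter.
set S2 := dom (iter 3 _ _); set S3 := dom (iter 3 _ _).
rewrite /fwc_pol /Epol; set M := minr_seq _.
clearbody S2 S3 M; clear m2 m3 hb.
rewrite !util_eq !phiE !eqE /=.
move=> b2 b3 hinv l3 l2.
case: hinv => [[_ /andP [n2 n3]]|/andP [h2 h2']|/andP [h3 h3']]; clear heps.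
- apply: (le_trans l2); rewrite (negbTE n2) (negbTE n3) /=.
  case: (e1 \in S2) => /=; lra.
- apply: (le_trans l2).
  case h1: (e1 \in S2); case h3: (e3 \in S2) => /=; try lra.
  by move: b2; rewrite all_in.
- apply: (le_trans l3).
  case h1: (e1 \in S3); case h2: (e2 \in S3) => /=; try lra.
  by move: b3; rewrite all_in.
Qed.

End Inst.

Unset Implicit Arguments.
Unset Strict Implicit.

Theorem mainTheorem4 (R : realFieldType) (eps : R) :
  0 < eps < 1 ->
  exists p : {ffun Eit -> Ost} -> R,
    [/\ prior_ok p,
        (forall phi, 0 < p phi <-> phi \in [:: phi_i e1; phi_i e2; phi_i e3]),
        [/\ pw_monotone p (util eps), pw_submodular p (util eps),
            wc_monotone p (util eps), min_dependency p (util eps)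
          & ~ wc_submodular p (util eps)],
        (exists pi, is_greedy p (util eps) 2 pi) /\
        (forall pi, is_greedy p (util eps) 2 pi -> fwc_pol p (util eps) pi = eps)
      & (exists pi, bounded p 2 pi /\ fwc_pol p (util eps) pi = 1) /\
        (forall pi, bounded p 2 pi -> fwc_pol p (util eps) pi <= 1)].
Proof.
move=> heps; exists (pr R); split.
- exact: prior_okP.
- by move=> phi; rewrite pr_gt0.
- split; [exact: pw_mono | exact: pw_submod | exact: wc_mono heps
         | exact: min_dep | exact: not_wc_submod].
- split; first by exists (gpi eps); apply: gpi_greedy.
  by move=> pi hg; apply: greedy_val.
- split; first by exists (opt); split; [apply: opt_bounded | apply: opt_val].
  by move=> pi hb; apply: bounded_le.
Qed.
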